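(* Let $R$ be a ring and $M$ a right $R$-module. (1) If $M$ is subinjective extension-reflecting, then $M$ is $FG$-injective if and only if $M$ is $C$-injective. (2) If $M$ is subprojective extension-reflecting, then $M$ is $FG$-projective if and only if $M$ is $C$-projective.
   Context: Modules are unital right $R$-modules. $M$ is $FG$-injective (resp. $C$-injective) if every homomorphism from $M$ to a finitely generated (resp. cyclic) module factors through an injective module. $M$ is $FG$-projective (resp. $C$-projective) if for every epimorphism $f\colon N\to M$ and every homomorphism $g\colon F\to M$ with $F$ finitely generated (resp. cyclic) there is $h\colon F\to N$ with $g=fh$. For modules $X,Y$, $X\in \underline{\mathfrak{In}}^{-1}(Y)$ means: for every module $C$ containing $X$ as a submodule, every homomorphism $X\to Y$ extends to $C\to Y$; $X\in \underline{\mathfrak{Pr}}^{-1}(Y)$ means: for every epimorphism $g\colon B\to X$ and every homomorphism $f\colon Y\to X$ there exists $h\colon Y\to B$ with $gh=f$. $M$ is subinjective extension-reflecting if for every short exact sequence $0\to A\to B\to C\to 0$, $M\in \underline{\mathfrak{In}}^{-1}(A)\cap \underline{\mathfrak{In}}^{-1}(C)$ implies $M\in \underline{\mathfrak{In}}^{-1}(B)$; subprojective extension-reflecting is defined the same way with $\underline{\mathfrak{Pr}}^{-1}$ in place of $\underline{\mathfrak{In}}^{-1}$. *)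

(* Defs.v *)
From HB Require Import structures.
From mathcomp Require Import all_boot all_algebra.
Set Implicit Arguments. Unset Strict Implicit. Unset Printing Implicit Defensive.
Import GRing.Theory.
Local Open Scope ring_scope.

(* Right R-modules are modelled as left modules over the converse ring R^c:
   for r : R^c and m : M, [r *: m] stands for the right action m r. *)
Notation rmodType R := (lmodType R^c).

Section ModDefs.
Variable R : pzRingType.

Definition is_hom (M N : rmodType R) (f : M -> N) : Prop :=
  forall (r : R^c) (x y : M), f (r *: x + y) = r *: f x + f y.

Definition fin_gen (M : rmodType R) : Prop :=
  exists s : seq M, forall m : M,
    exists c : nat -> R^c, m = \sum_(i < size s) c i *: s`_i.

Definition cyclic_mod (M : rmodType R) : Prop :=
  exists x : M, forall m : M, exists r : R^c, m = r *: x.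

Definition injective_mod (E : rmodType R) : Prop :=
  forall (A B : rmodType R) (i : A -> B) (f : A -> E),
    is_hom i -> injective i -> is_hom f ->
    exists g : B -> E, is_hom g /\ forall a, g (i a) = f a.

Definition factors_through_injective (M N : rmodType R) (h : M -> N) : Prop :=
  exists (E : rmodType R) (u : M -> E) (v : E -> N),
    [/\ injective_mod E, is_hom u, is_hom v & forall m, h m = v (u m)].

Definition FG_injective (M : rmodType R) : Prop :=
  forall (N : rmodType R) (h : M -> N), fin_gen N -> is_hom h ->
    factors_through_injective h.

Definition C_injective (M : rmodType R) : Prop :=
  forall (N : rmodType R) (h : M -> N), cyclic_mod N -> is_hom h ->
    factors_through_injective h.

Definition FG_projective (M : rmodType R) : Prop :=
  forall (N F : rmodType R) (f : N -> M) (g : F -> M),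
    is_hom f -> (forall m, exists n, f n = m) -> is_hom g -> fin_gen F ->
    exists h : F -> N, is_hom h /\ forall x, g x = f (h x).

Definition C_projective (M : rmodType R) : Prop :=
  forall (N F : rmodType R) (f : N -> M) (g : F -> M),
    is_hom f -> (forall m, exists n, f n = m) -> is_hom g -> cyclic_mod F ->
    exists h : F -> N, is_hom h /\ forall x, g x = f (h x).

(* X \in In^{-1}(Y): for every module C containing X as a submodule (i.e. every
   monomorphism i : X -> C), every homomorphism X -> Y extends to C -> Y. *)
Definition In_inv (X Y : rmodType R) : Prop :=
  forall (C : rmodType R) (i : X -> C) (f : X -> Y),
    is_hom i -> injective i -> is_hom f ->
    exists g : C -> Y, is_hom g /\ forall x, g (i x) = f x.

Definition Pr_inv (X Y : rmodType R) : Prop :=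
  forall (B : rmodType R) (g : B -> X) (f : Y -> X),
    is_hom g -> (forall x, exists b, g b = x) -> is_hom f ->
    exists h : Y -> B, is_hom h /\ forall y, g (h y) = f y.

Definition short_exact (A B C : rmodType R) (f : A -> B) (g : B -> C) : Prop :=
  [/\ is_hom f, is_hom g, injective f, (forall c, exists b, g b = c) &
      forall b, g b = 0 <-> exists a, f a = b].

Definition subinj_ext_refl (M : rmodType R) : Prop :=
  forall (A B C : rmodType R) (f : A -> B) (g : B -> C),
    short_exact f g -> In_inv M A -> In_inv M C -> In_inv M B.

Definition subproj_ext_refl (M : rmodType R) : Prop :=
  forall (A B C : rmodType R) (f : A -> B) (g : B -> C),
    short_exact f g -> Pr_inv M A -> Pr_inv M C -> Pr_inv M B.

End ModDefs.

(* Main.v *)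
Require Import Defs.
From HB Require Import structures.
From mathcomp Require Import all_boot all_order all_algebra.
From mathcomp Require Import boolp classical_sets.
Set Implicit Arguments. Unset Strict Implicit. Unset Printing Implicit Defensive.
Import Order.TTheory GRing.Theory Num.Theory.
Local Open Scope ring_scope.

Definition frac (q : rat) : rat := q - (Num.floor q)%:~R.

Lemma fracDz q (z : int) : frac (q + z%:~R) = frac q.
Proof.
rewrite /frac floorDrz ?intr_int // intrKfloor rmorphD /=.
by rewrite opprD addrACA subrr addr0.
Qed.

Lemma frac_small q : 0 <= q < 1 -> frac q = q.
Proof.
move=> h; by rewrite /frac (@Num.Theory.floor_def _ q 0) ?subr0.
Qed.

Lemma fracE q : frac q = q + (- Num.floor q)%:~R.
Proof. by rewrite rmorphN. Qed.

Lemma fracK q : frac (frac q) = frac q.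
Proof. by rewrite -[RHS](fracDz q (- Num.floor q)) -fracE. Qed.

Lemma fracDl a b : frac (frac a + b) = frac (a + b).
Proof. by rewrite [frac a]fracE addrAC fracDz. Qed.

Lemma fracDr a b : frac (a + frac b) = frac (a + b).
Proof. by rewrite addrC fracDl addrC. Qed.

Lemma fracN a : frac (- frac a) = frac (- a).
Proof. by rewrite [frac a]fracE opprD -rmorphN fracDz. Qed.

Lemma frac0 : frac 0 = 0.
Proof. by rewrite frac_small // lexx ltr01. Qed.

Lemma fracz (z : int) : frac z%:~R = 0.
Proof. by rewrite -[z%:~R]add0r fracDz frac0. Qed.

Definition qz := {q : rat | frac q == q}.
HB.instance Definition _ := Choice.on qz.

Lemma fracP q : frac (frac q) == frac q. Proof. by rewrite fracK. Qed.
Definition mkqz q : qz := exist _ (frac q) (fracP q).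

Definition qz0 : qz := mkqz 0.
Definition qzadd (x y : qz) : qz := mkqz (sval x + sval y).
Definition qzopp (x : qz) : qz := mkqz (- sval x).

Lemma qz_eq (x y : qz) : sval x = sval y -> x = y.
Proof. by move=> h; apply: val_inj. Qed.

Lemma svalK (x : qz) : frac (sval x) = sval x.
Proof. by case: x => q /= /eqP. Qed.

Lemma qzaddA : associative qzadd.
Proof. by move=> x y z; apply: qz_eq => /=; rewrite fracDl fracDr addrA. Qed.
Lemma qzaddC : commutative qzadd.
Proof. by move=> x y; apply: qz_eq => /=; rewrite addrC. Qed.
Lemma qzadd0 : left_id qz0 qzadd.
Proof. by move=> x; apply: qz_eq => /=; rewrite frac0 add0r svalK. Qed.
Lemma qzaddN : left_inverse qz0 qzopp qzadd.
Proof. by move=> x; apply: qz_eq => /=; rewrite fracDl addNr. Qed.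

HB.instance Definition _ := GRing.isZmodule.Build qz qzaddA qzaddC qzadd0 qzaddN.

Lemma sval_mulrn (x : qz) n : sval (x *+ n) = frac (sval x *+ n).
Proof.
elim: n => [|n IH]; first by rewrite mulr0n /= frac0.
rewrite mulrS /= IH fracDr -mulrS //.
Qed.

Lemma qz_div (e : qz) (n : nat) : (0 < n)%N -> exists d : qz, d *+ n = e.
Proof.
move=> n0; exists (mkqz (sval e / n%:R)); apply: qz_eq.
rewrite sval_mulrn /= [frac (sval e / n%:R)]/frac.
have -> : (sval e / n%:R - (Num.floor (sval e / n%:R))%:~R) *+ n
   = sval e + (- (Num.floor (sval e / n%:R) *+ n))%:~R.
  rewrite mulrnBl -[X in X - _]mulr_natr mulfVK ?pnatr_eq0 -?lt0n // rmorphN rmorphMn.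
  by [].
by rewrite fracDz svalK.
Qed.

Lemma qz_tors (n : nat) : (1 < n)%N -> exists d : qz, d != 0 /\ d *+ n = 0.
Proof.
move=> n1; have n0 : (0 < n)%N by apply: ltn_trans n1.
have hs : frac (n%:R^-1) = n%:R^-1.
  apply: frac_small; rewrite invr_ge0 ler0n /= invf_lt1 ?ltr0n //.
  by rewrite ltr1n.
exists (mkqz n%:R^-1); split.
  apply/eqP => /(congr1 sval) /=; rewrite hs frac0 => /eqP.
  by rewrite invr_eq0 pnatr_eq0; case: (n) n0.
apply: qz_eq; rewrite sval_mulrn /= hs -[_ *+ n]mulr_natr mulVf ?pnatr_eq0; last by case: (n) n0.
by have := fracz 1; rewrite frac0.
Qed.

Local Open Scope classical_set_scope.

Section RelMul.
Variables (U V : zmodType) (G : U -> V -> Prop).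
Hypothesis G00 : G 0 0.
Hypothesis Gsub : forall x y d e, G x d -> G y e -> G (x - y) (d - e).

Lemma G_neg x d : G x d -> G (- x) (- d).
Proof. by move=> h; have := Gsub G00 h; rewrite !sub0r. Qed.

Lemma G_mulz x d (k : int) : G x d -> G (x *~ k) (d *~ k).
Proof.
move=> h.
have hn : forall n : nat, G (x *+ n) (d *+ n).
  elim=> [|n IH]; first by rewrite !mulr0n.
  by have := Gsub IH (G_neg h); rewrite !opprK -!mulrSr.
case: k => n; first exact: hn.
by rewrite NegzE !mulrNz; apply: G_neg; apply: hn.
Qed.
End RelMul.

Lemma int_subgroup (S : int -> Prop) : S 0 -> (forall a b, S a -> S b -> S (a - b)) ->
  (forall k, S k -> k = 0) \/
  exists n : nat, [/\ (0 < n)%N, S n%:Z & forall k, S k -> exists q, k = q * n%:Z].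
Proof.
move=> S0 Ssub.
have Smul : forall a (q : int), S a -> S (a *~ q).
  move=> a q Sa.
  have := @G_mulz _ _ (fun x (y : int) => S x /\ y = 0) (conj S0 erefl) _ a 0 q (conj Sa erefl).
  by case; [move=> x y d e [h1 ->] [h2 ->]; split; [apply: Ssub|rewrite subr0] | ].
have [ex|nex] := pselect (exists m : nat, (0 < m)%N /\ S m%:Z); last first.
  left=> k Sk; case: k Sk => m Sm.
    by case: m Sm => // m Sm; exfalso; apply: nex; exists m.+1.
  exfalso; apply: nex; exists m.+1; split => //.
  by have := Ssub _ _ S0 Sm; rewrite sub0r NegzE opprK.
right.
have ex' : exists m, `[< (0 < m)%N /\ S m%:Z >] by case: ex => m h; exists m; apply/asboolP.
case: (ex_minnP ex') => n /asboolP [n0 Sn] nmin.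
exists n; split => // k Sk.
exists (k %/ n)%Z.
have nz : (n%:Z != 0) by rewrite eqz_nat -lt0n.
have Sr : S (k %% n)%Z.
  have := Ssub _ _ Sk (Smul _ (k %/ n)%Z Sn).
  by rewrite {1}(divz_eq k n) -mulrzr intz [n%:Z * _]mulrC addrAC subrr add0r.
have r0 : 0 <= (k %% n)%Z by apply: modz_ge0.
have rlt : (k %% n)%Z < n%:Z by apply: ltz_pmod; rewrite ltz_nat.
case E : (k %% n)%Z r0 rlt Sr => [r|r] //= _ rlt Sr.
case: r E rlt Sr => [|r] E rlt Sr.
  by rewrite {1}(divz_eq k n) E addr0.
have := nmin r.+1 (introT (asboolP _) (conj erefl Sr)).
by rewrite leqNgt -ltz_nat rlt.
Qed.

Section Extend.
Variable B : zmodType.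

Definition PG (G : set (B * qz)) :=
  [/\ (forall b d d', G (b,d) -> G (b,d') -> d = d'), G (0,0) &
      (forall x y d e, G (x,d) -> G (y,e) -> G (x - y, d - e))].

Lemma compat (A : set (B * qz)) b : PG A ->
  exists d0 : qz, forall c e (k : int), A (c,e) -> c = b *~ k -> e = d0 *~ k.
Proof.
case=> Afun A00 Asub.
pose S k := exists e, A (b *~ k, e).
have S0 : S 0 by exists 0.
have Ssub : forall a a', S a -> S a' -> S (a - a').
  by move=> a a' [e h] [e' h']; exists (e - e'); rewrite mulrzBr; apply: Asub.
have [all0|[n [n0 [en Sn] Sdiv]]] := int_subgroup S0 Ssub.
  exists 0 => c e k Ace ck; have k0 : k = 0 by apply: all0; exists e; rewrite -ck.
  by move: Ace; rewrite ck k0 mulr0z mul0rz => h; apply: Afun h A00.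
have [d0 hd0] := qz_div en n0.
exists d0 => c e k Ace ck.
have [q kq] : exists q, k = q * n%:Z by apply: Sdiv; exists e; rewrite -ck.
have := @G_mulz _ _ (fun x y => A (x,y)) A00 (fun x y d e => @Asub x y d e) _ _ q Sn.
rewrite -mulrzA mulrC -kq -ck => h.
by rewrite (Afun _ _ _ Ace h) -hd0 -mulrz_nat -mulrzA kq mulrC natz.
Qed.

Lemma extend (G0 : set (B * qz)) : PG G0 -> exists phi : B -> qz,
  (forall x y, phi (x - y) = phi x - phi y) /\ (forall b d, G0 (b,d) -> phi b = d).
Proof.
move=> PG0.
pose P := fun G : set (B * qz) => (exists p, G p) -> PG G /\ G0 `<=` G.
have chain : forall F, F `<=` P -> total_on F subset -> P (\bigcup_(X in F) X).
  move=> F FP Ftot [p [X FX Xp]].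
  have two : forall p q, (\bigcup_(X in F) X) p -> (\bigcup_(X in F) X) q ->
      exists2 Y, F Y & Y p /\ Y q.
    move=> p1 q1 [X1 F1 h1] [X2 F2 h2]; case: (Ftot _ _ F1 F2) => s.
      by exists X2 => //; split => //; apply: s.
    by exists X1 => //; split => //; apply: s.
  have [PX G0X] := FP X FX (ex_intro _ p Xp).
  split; last by move=> q Gq; exists X => //; apply: G0X.
  split.
  - move=> b d d' h1 h2; have [Y FY [y1 y2]] := two _ _ h1 h2.
    have [[f _ _] _] := FP Y FY (ex_intro _ _ y1); exact: f y1 y2.
  - by exists X => //; case: PX.
  - move=> x y d e h1 h2; have [Y FY [y1 y2]] := two _ _ h1 h2.
    have [[_ _ s] _] := FP Y FY (ex_intro _ _ y1); exists Y => //; exact: s _ _ _ _ y1 y2.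
have [A [PA maxA]] := Zorn_bigcup chain.
have G000 : G0 (0,0) by case: PG0.
have Ane : exists p, A p.
  apply: contrapT => Ae.
  apply: (maxA G0); last by move=> _; split.
  split; first by move=> p Ap; exfalso; apply: Ae; exists p.
  by move=> h; apply: Ae; exists (0,0); apply: h.
have [[Afun A00 Asub] G0A] := PA Ane.
have tot : forall b, exists d, A (b,d).
  move=> b; apply: contrapT => nb.
  have [d0 hd0] := @compat A b (And3 Afun A00 Asub).
  pose A' := fun p : B * qz => exists c e (k : int), A (c,e) /\ p = (c + b *~ k, e + d0 *~ k).
  have AA' : A `<=` A'.
    by move=> [c e] Ace; exists c, e, 0; rewrite !mulr0z !addr0.
  apply: (maxA A').
    split => // h; apply: nb; exists d0; apply: h; exists 0, 0, 1; split => //.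
    by rewrite !add0r !mulr1z.
  move=> _; split; last by move=> p /G0A; apply: AA'.
  split.
  - move=> x d d' [c [e [k [Ace [-> ->]]]]] [c' [e' [k' [Ace' []]]]] cc ->.
    have h1 : c - c' = b *~ (k' - k).
      by rewrite mulrzBr; apply: (addIr (b *~ k)); rewrite subrK addrAC cc addrAC subrr add0r.
    have := hd0 _ _ _ (Asub _ _ _ _ Ace Ace') h1.
    rewrite mulrzBr => /eqP; rewrite subr_eq => /eqP ->.
    by rewrite addrAC subrK addrC.
  - by exists 0, 0, 0; rewrite !mulr0z !addr0.
  - move=> x y d e [c [e1 [k [A1 [-> ->]]]]] [c' [e' [k' [A2 [-> ->]]]]].
    exists (c - c'), (e1 - e'), (k - k'); split; first exact: Asub.
    by rewrite !mulrzBr; congr (_, _); rewrite opprD addrACA.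
exists (fun b => sval (cid (tot b))); split.
  move=> x y.
  apply: Afun (svalP (cid (tot (x - y)))) _.
  exact: Asub (svalP (cid (tot x))) (svalP (cid (tot y))).
by move=> b d h; apply: Afun (svalP (cid (tot b))) (G0A _ h).
Qed.
End Extend.

Lemma separate (B : zmodType) (x : B) : x != 0 -> exists phi : B -> qz,
  (forall a b, phi (a - b) = phi a - phi b) /\ phi x != 0.
Proof.
move=> x0.
have [d [d0 hd]] : exists d : qz, d != 0 /\ forall k k' : int, x *~ k = x *~ k' -> d *~ k = d *~ k'.
  pose S k := x *~ k = 0.
  have S0 : S 0 by rewrite /S mulr0z.
  have Ssub : forall a b, S a -> S b -> S (a - b).
    by move=> a b; rewrite /S mulrzBr => -> ->; rewrite subr0.
  have [all0|[n [n0 Sn Sdiv]]] := int_subgroup S0 Ssub.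
    have [d [dn0 _]] := qz_tors (isT : (1 < 2)%N).
    exists d; split => // k k' e.
    have : S (k - k') by rewrite /S mulrzBr e subrr.
    by move/all0/eqP; rewrite subr_eq0 => /eqP ->.
  have n1 : (1 < n)%N.
    case: n n0 Sn {Sdiv} => [|[|n]] // _ Sn.
    by move: x0; rewrite -[x]mulr1z Sn eqxx.
  have [d [dn0 dn]] := qz_tors n1.
  exists d; split => // k k' e.
  have : S (k - k') by rewrite /S mulrzBr e subrr.
  move/Sdiv => [q hq]; apply/eqP; rewrite -subr_eq0 -mulrzBr hq mulrC mulrzA.
  by rewrite -natz mulrz_nat dn mul0rz.
pose G0 := fun p : B * qz => exists k : int, p = (x *~ k, d *~ k).
have PG0 : PG G0.
  split.
  - by move=> b e e' [k [-> ->]] [k' [e1 ->]]; apply: hd.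
  - by exists 0; rewrite !mulr0z.
  - move=> a b e e' [k [-> ->]] [k' [-> ->]]; exists (k - k').
    by rewrite !mulrzBr.
have [phi [phiD phix]] := extend PG0.
exists phi; split => //.
by rewrite (phix x d) //; exists 1; rewrite !mulr1z.
Qed.

Local Close Scope classical_set_scope.

Section HomFacts.
Variables (R : pzRingType) (M N : rmodType R) (f : M -> N).
Hypothesis hf : is_hom f.
Lemma homB x y : f (x - y) = f x - f y.
Proof. by rewrite -[x - y]addrC -scaleN1r hf scaleN1r addrC. Qed.
Lemma hom0 : f 0 = 0.
Proof. by have := homB 0 0; rewrite !subrr. Qed.
Lemma homZ (r : R^c) x : f (r *: x) = r *: f x.
Proof. by rewrite -[r *: x]addr0 hf hom0 addr0. Qed.
Lemma homD x y : f (x + y) = f x + f y.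
Proof. by rewrite -{1}[x]scale1r hf scale1r. Qed.
End HomFacts.

Section AddF.
Variables (U V : zmodType) (g : U -> V).
Hypothesis hg : forall s t, g (s - t) = g s - g t.
Lemma addf0 : g 0 = 0. Proof. by have := hg 0 0; rewrite !subrr. Qed.
Lemma addfN x : g (- x) = - g x. Proof. by rewrite -sub0r hg addf0 sub0r. Qed.
Lemma addfD x y : g (x + y) = g x + g y.
Proof. by rewrite -{1}[y]opprK hg addfN opprK. Qed.
End AddF.

Section EMod.
Variables (R : pzRingType) (I : Type).

Definition addf (g : R -> qz) := forall s t, g (s - t) = g s - g t.
Definition Ec := {g : I -> R -> qz | `[< forall j, addf (g j) >]}.
HB.instance Definition _ := Choice.on Ec.

Lemma Ec_eq (x y : Ec) : (forall j s, sval x j s = sval y j s) -> x = y.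
Proof. by move=> h; apply: val_inj; apply: funext => j; apply: funext => s; apply: h. Qed.

Lemma EcP (x : Ec) j : addf (sval x j).
Proof. by case: x => g /= /asboolP. Qed.

Lemma E0P : `[< forall j : I, addf (fun _ : R => 0) >].
Proof. by apply/asboolP => j s t; rewrite subr0. Qed.
Definition E0 : Ec := exist _ (fun _ _ => 0) E0P.

Lemma EaddP (x y : Ec) : `[< forall j, addf (fun s => sval x j s + sval y j s) >].
Proof. by apply/asboolP => j s t; rewrite !EcP opprD addrACA. Qed.
Definition Eadd (x y : Ec) : Ec := exist _ (fun j s => sval x j s + sval y j s) (EaddP x y).

Lemma EoppP (x : Ec) : `[< forall j, addf (fun s => - sval x j s) >].
Proof. by apply/asboolP => j s t; rewrite !EcP opprD. Qed.
Definition Eopp (x : Ec) : Ec := exist _ (fun j s => - sval x j s) (EoppP x).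

Lemma EaddA : associative Eadd.
Proof. by move=> x y z; apply: Ec_eq => j s /=; rewrite addrA. Qed.
Lemma EaddC : commutative Eadd.
Proof. by move=> x y; apply: Ec_eq => j s /=; rewrite addrC. Qed.
Lemma Eadd0 : left_id E0 Eadd.
Proof. by move=> x; apply: Ec_eq => j s /=; rewrite add0r. Qed.
Lemma EaddN : left_inverse E0 Eopp Eadd.
Proof. by move=> x; apply: Ec_eq => j s /=; rewrite addNr. Qed.

HB.instance Definition _ := GRing.isZmodule.Build Ec EaddA EaddC Eadd0 EaddN.

Lemma EscaleP (r : R) (x : Ec) : `[< forall j, addf (fun s => sval x j (r * s)) >].
Proof. by apply/asboolP => j s t; rewrite mulrBr EcP. Qed.
Definition Escale (r : R^c) (x : Ec) : Ec := exist _ (fun j s => sval x j ((r : R) * s)) (EscaleP r x).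

Lemma EscaleA a b v : Escale a (Escale b v) = Escale (a * b) v.
Proof. by apply: Ec_eq => j s /=; rewrite mulrA. Qed.
Lemma Escale1 : left_id 1 Escale.
Proof. by move=> v; apply: Ec_eq => j s /=; rewrite mul1r. Qed.
Lemma EscaleDr : right_distributive Escale +%R.
Proof. by move=> a u v; apply: Ec_eq. Qed.
Lemma EscaleDl v : {morph Escale^~ v: a b / a + b}.
Proof. by move=> a b; apply: Ec_eq => j s /=; rewrite mulrDl (addfD (EcP v j)). Qed.

HB.instance Definition _ := GRing.Zmodule_isLmodule.Build R^c Ec EscaleA Escale1 EscaleDr EscaleDl.

Lemma svalE (x : Ec) j s : sval x j s = sval x j s. Proof. by []. Qed.
End EMod.

Section Injective.
Variables (R : pzRingType) (I : Type).

Lemma Ec_injective : injective_mod (Ec R I : rmodType R).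
Proof.
move=> A B i f hi ii hf.
have H : forall j : I, exists psi : B -> qz,
    (forall x y, psi (x - y) = psi x - psi y) /\
    (forall a, psi (i a) = sval (f a) j 1).
  move=> j.
  pose G0 := fun p : B * qz => exists a, p = (i a, sval (f a) j 1).
  have PG0 : PG G0.
    split.
    - by move=> b d d' [a [-> ->]] [a' [/ii -> ->]].
    - by exists 0; rewrite (hom0 hi) (hom0 hf).
    - move=> x y d e [a [-> ->]] [a' [-> ->]]; exists (a - a').
      by rewrite (homB hi) (homB hf).
  have [psi [psiD psiE]] := extend PG0.
  by exists psi; split => // a; apply: psiE; exists a.
pose psi j := sval (cid (H j)).
have psiD j : forall x y, psi j (x - y) = psi j x - psi j y.
  by case: (svalP (cid (H j))).
have psiE j : forall a, psi j (i a) = sval (f a) j 1.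
  by case: (svalP (cid (H j))).
have gP : forall b : B, `[< forall j, addf (fun s : R => psi j ((s : R^c) *: b)) >].
  by move=> b; apply/asboolP => j s t; rewrite scalerBl psiD.
pose g (b : B) : Ec R I := exist _ (fun j (s : R) => psi j ((s : R^c) *: b)) (gP b).
exists g; split.
  move=> r x y; apply: Ec_eq => j s /=.
  by rewrite scalerDr scalerA (addfD (psiD j)).
move=> a; apply: Ec_eq => j s /=.
by rewrite -(homZ hi) psiE (homZ hf) /= mulr1.
Qed.

Definition Idx (M : rmodType R) := {phi : M -> qz | forall a b, phi (a - b) = phi a - phi b}.

Lemma embed (M : rmodType R) : exists u : M -> Ec R (Idx M), is_hom u /\ injective u.
Proof.
have uP : forall m : M, `[< forall j : Idx M, addf (fun s : R => sval j ((s : R^c) *: m)) >].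
  by move=> m; apply/asboolP => j s t; rewrite scalerBl (svalP j).
exists (fun m => exist _ (fun j (s : R) => sval j ((s : R^c) *: m)) (uP m)); split.
  move=> r x y; apply: Ec_eq => j s /=.
  by rewrite scalerDr scalerA (addfD (svalP j)).
move=> m m' /(congr1 sval) e.
apply/eqP; rewrite -subr_eq0; apply/negP => /negP ne.
have [phi [phiD phin]] := separate ne.
have := congr1 (fun F => F (exist _ phi phiD) 1) e => /=.
rewrite !scale1r => e'.
by move: phin; rewrite phiD e' subrr eqxx.
Qed.
End Injective.

Section SubQuot.
Variables (R : pzRingType) (N : rmodType R) (P : N -> Prop).
Hypothesis P0 : P 0.
Hypothesis Psub : forall x y, P x -> P y -> P (x - y).
Hypothesis PZ : forall (r : R^c) x, P x -> P (r *: x).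

Lemma PN x : P x -> P (- x). Proof. by move=> h; have := Psub P0 h; rewrite sub0r. Qed.
Lemma PD x y : P x -> P y -> P (x + y).
Proof. by move=> hx hy; have := Psub hx (PN hy); rewrite opprK. Qed.

Definition Sc : Type := let _ := P0 in let _ := Psub in let _ := PZ in {x : N | `[< P x >]}.
HB.instance Definition _ := Choice.on Sc.
Lemma ScP (x : Sc) : P (sval x). Proof. by case: x => y /= /asboolP. Qed.
Definition S0 : Sc := exist _ 0 (introT (asboolP _) P0).
Definition Sadd (x y : Sc) : Sc := exist _ (sval x + sval y) (introT (asboolP _) (PD (ScP x) (ScP y))).
Definition Sopp (x : Sc) : Sc := exist _ (- sval x) (introT (asboolP _) (PN (ScP x))).
Lemma Sc_eq (x y : Sc) : sval x = sval y -> x = y. Proof. by move=> h; apply: val_inj. Qed.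
Lemma SaddA : associative Sadd. Proof. by move=> x y z; apply: Sc_eq; rewrite /= addrA. Qed.
Lemma SaddC : commutative Sadd. Proof. by move=> x y; apply: Sc_eq; rewrite /= addrC. Qed.
Lemma Sadd0 : left_id S0 Sadd. Proof. by move=> x; apply: Sc_eq; rewrite /= add0r. Qed.
Lemma SaddN : left_inverse S0 Sopp Sadd. Proof. by move=> x; apply: Sc_eq; rewrite /= addNr. Qed.
HB.instance Definition _ := GRing.isZmodule.Build Sc SaddA SaddC Sadd0 SaddN.
Definition Sscale (r : R^c) (x : Sc) : Sc := exist _ (r *: sval x) (introT (asboolP _) (PZ r (ScP x))).
Lemma SscaleA a b v : Sscale a (Sscale b v) = Sscale (a * b) v.
Proof. by apply: Sc_eq; rewrite /= scalerA. Qed.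
Lemma Sscale1 : left_id 1 Sscale. Proof. by move=> v; apply: Sc_eq; rewrite /= scale1r. Qed.
Lemma SscaleDr : right_distributive Sscale +%R.
Proof. by move=> a u v; apply: Sc_eq; rewrite /= scalerDr. Qed.
Lemma SscaleDl v : {morph Sscale^~ v: a b / a + b}.
Proof. by move=> a b; apply: Sc_eq; rewrite /= scalerDl. Qed.
HB.instance Definition _ := GRing.Zmodule_isLmodule.Build R^c Sc SscaleA Sscale1 SscaleDr SscaleDl.

Definition Sval (x : Sc) : N := sval x.
Lemma Sval_hom : is_hom Sval. Proof. by []. Qed.
Lemma Sval_inj : injective Sval. Proof. by move=> x y; apply: Sc_eq. Qed.
Lemma Sval_img y : P y <-> exists a, Sval a = y.
Proof.
split; first by move=> h; exists (exist _ y (introT (asboolP _) h)).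
by case=> a <-; apply: ScP.
Qed.

Definition coset (y : N) : set N := fun z => P (z - y).
Definition canon (y : N) : N := xget 0 (coset y).
Lemma canon_in y : P (canon y - y).
Proof. by apply: (xgetPex 0 (P := coset y)); exists y; rewrite /coset subrr. Qed.
Lemma coset_eq y y' : P (y - y') -> coset y = coset y'.
Proof.
move=> h; apply: funext => z; apply: propext; rewrite /coset; split => hz.
  by have := PD hz h; rewrite addrA subrK.
by have := Psub hz h; rewrite opprB addrA subrK.
Qed.
Lemma canon_eq y y' : P (y - y') -> canon y = canon y'.
Proof. by move=> h; rewrite /canon (coset_eq h). Qed.
Lemma canonK y : canon (canon y) = canon y.
Proof. by apply: canon_eq; apply: canon_in. Qed.

Definition Qt : Type := let _ := P0 in let _ := Psub in let _ := PZ in {y : N | `[< canon y = y >]}.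
HB.instance Definition _ := Choice.on Qt.
Definition mk (y : N) : Qt := exist _ (canon y) (introT (asboolP _) (canonK y)).
Lemma Qt_eq (x y : Qt) : sval x = sval y -> x = y. Proof. by move=> h; apply: val_inj. Qed.
Lemma mk_eq y y' : P (y - y') -> mk y = mk y'.
Proof. by move=> h; apply: Qt_eq; rewrite /= (canon_eq h). Qed.
Lemma mk_val (a : Qt) : mk (sval a) = a.
Proof. by apply: Qt_eq; case: a => y /= /asboolP. Qed.
Lemma mkin y : P (sval (mk y) - y). Proof. exact: canon_in. Qed.
Lemma mkDl y z : mk (sval (mk y) + z) = mk (y + z).
Proof. by apply: mk_eq; rewrite opprD addrACA subrr addr0; apply: mkin. Qed.
Lemma mkDr y z : mk (z + sval (mk y)) = mk (z + y).
Proof. by rewrite addrC mkDl addrC. Qed.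
Lemma mkN y : mk (- sval (mk y)) = mk (- y).
Proof. by apply: mk_eq; rewrite -opprD; apply: PN; apply: mkin. Qed.
Lemma mkZ r y : mk (r *: sval (mk y)) = mk (r *: y).
Proof. by apply: mk_eq; rewrite -scalerBr; apply: PZ; apply: mkin. Qed.

Definition Q0 : Qt := mk 0.
Definition Qadd (x y : Qt) : Qt := mk (sval x + sval y).
Definition Qopp (x : Qt) : Qt := mk (- sval x).
Lemma QaddA : associative Qadd.
Proof. by move=> x y z; rewrite /Qadd mkDl mkDr addrA. Qed.
Lemma QaddC : commutative Qadd. Proof. by move=> x y; rewrite /Qadd addrC. Qed.
Lemma Qadd0 : left_id Q0 Qadd. Proof. by move=> x; rewrite /Qadd mkDl add0r mk_val. Qed.
Lemma QaddN : left_inverse Q0 Qopp Qadd. Proof. by move=> x; rewrite /Qadd mkDl addNr. Qed.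
HB.instance Definition _ := GRing.isZmodule.Build Qt QaddA QaddC Qadd0 QaddN.
Definition Qscale (r : R^c) (x : Qt) : Qt := mk (r *: sval x).
Lemma QscaleA a b v : Qscale a (Qscale b v) = Qscale (a * b) v.
Proof. by rewrite /Qscale mkZ scalerA. Qed.
Lemma Qscale1 : left_id 1 Qscale. Proof. by move=> v; rewrite /Qscale scale1r mk_val. Qed.
Lemma QscaleDr : right_distributive Qscale +%R.
Proof.
move=> a u v; rewrite /Qscale /GRing.add /= /Qadd mkZ mkDl mkDr.
by rewrite scalerDr.
Qed.
Lemma QscaleDl v : {morph Qscale^~ v: a b / a + b}.
Proof. by move=> a b; rewrite /Qscale /GRing.add /= /Qadd mkDl mkDr scalerDl. Qed.
HB.instance Definition _ := GRing.Zmodule_isLmodule.Build R^c Qt QscaleA Qscale1 QscaleDr QscaleDl.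

Lemma mk_hom : is_hom mk.
Proof.
move=> r x y.
change (mk (r *: x + y) = mk (sval (mk (r *: sval (mk x))) + sval (mk y))).
rewrite mkDl mkDr; apply: mk_eq; rewrite opprD addrACA subrr addr0 -scalerBr.
by apply: PZ; rewrite -opprB; apply: PN; apply: mkin.
Qed.
Lemma mk_surj (a : Qt) : exists y, mk y = a. Proof. by exists (sval a); apply: mk_val. Qed.
Lemma mk0 y : mk y = 0 <-> P y.
Proof.
split; last by move=> h; apply: mk_eq; rewrite subr0.
move=> e; have h1 := mkin y; have h2 := mkin 0.
rewrite e in h1; have := Psub h2 h1.
by rewrite subr0 opprB addrC subrK.
Qed.
End SubQuot.

Section Induct.
Variable R : pzRingType.

Lemma hom_sum (M N : rmodType R) (f : M -> N) n (F : 'I_n -> M) :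
  is_hom f -> f (\sum_(i < n) F i) = \sum_(i < n) f (F i).
Proof.
move=> hf; elim: n F => [|n IH] F; first by rewrite !big_ord0 (hom0 hf).
by rewrite !big_ord_recr /= (homD hf) IH.
Qed.

Lemma cyclic_fg (N : rmodType R) : cyclic_mod N -> fin_gen N.
Proof.
case=> x hx; exists [:: x] => m; have [r ->] := hx m.
by exists (fun _ => r); rewrite big_ord1.
Qed.

Lemma fg_induct (Q : rmodType R -> Prop) :
  (forall (A B C : rmodType R) (f : A -> B) (g : B -> C),
      short_exact f g -> Q A -> Q C -> Q B) ->
  (forall N, cyclic_mod N -> Q N) -> forall N, fin_gen N -> Q N.
Proof.
move=> ext cyc.
suff H : forall n (N : rmodType R) (s : seq N), size s = n ->
    (forall m : N, exists c : nat -> R^c, m = \sum_(i < size s) c i *: s`_i) -> Q N.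
  by move=> N [s hs]; apply: (H _ N s erefl hs).
elim=> [|n IH] N s sz hs.
  apply: cyc; exists 0 => m; exists 0; rewrite scaler0.
  by have [c ->] := hs m; rewrite sz big_ord0.
case: s sz hs => [//|x s'] [sz] hs.
pose P := fun y : N => exists r : R^c, y = r *: x.
have P0 : P 0 by exists 0; rewrite scale0r.
have Psub : forall a b, P a -> P b -> P (a - b).
  by move=> a b [r ->] [r' ->]; exists (r - r'); rewrite scalerBl.
have PZ : forall (r : R^c) a, P a -> P (r *: a).
  by move=> r a [r' ->]; exists (r * r'); rewrite scalerA.
apply: (ext (Sc P0 Psub PZ) N (Qt P0 Psub PZ) (@Sval _ _ P P0 Psub PZ) (mk P0 Psub PZ)).
- split.
  + exact: Sval_hom.
  + exact: mk_hom.
  + exact: Sval_inj.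
  + exact: mk_surj.
  + by move=> b; rewrite mk0; apply: Sval_img.
- apply: cyc.
  have Px : P x by exists 1; rewrite scale1r.
  exists (exist _ x (introT (asboolP _) Px)) => a.
  have [r hr] := ScP a; exists r; apply: Sc_eq; rewrite hr //.
- apply: (IH _ (map (mk P0 Psub PZ) s')); first by rewrite size_map.
  move=> m; have [c hc] := hs (sval m).
  exists (fun i => c i.+1).
  rewrite -[m]mk_val hc (hom_sum _ (mk_hom P0 Psub PZ)) big_ord_recl /=.
  have -> : mk P0 Psub PZ (c 0%N *: x) = 0.
    by apply/mk0; exists (c 0%N).
  rewrite add0r size_map; apply: eq_bigr => i _.
  rewrite (homZ (mk_hom P0 Psub PZ)) (nth_map 0) //.
Qed.
End Induct.

Section Final.
Variables (R : pzRingType) (M : rmodType R).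

Lemma fact_ext (N : rmodType R) (h : M -> N) : factors_through_injective h ->
  forall (C : rmodType R) (i : M -> C), is_hom i -> injective i ->
  exists g : C -> N, is_hom g /\ forall x, g (i x) = h x.
Proof.
move=> [E [u [v [Einj hu hv huv]]]] C i hi ii.
have [w [hw wE]] := Einj M C i u hi ii hu.
exists (fun c => v (w c)); split.
  by move=> r x y /=; rewrite hw hv.
by move=> x; rewrite wE huv.
Qed.

Lemma In_fact (N : rmodType R) : In_inv M N ->
  forall h : M -> N, is_hom h -> factors_through_injective h.
Proof.
move=> hIn h hh.
have [u [hu iu]] := embed M.
have [v [hv vE]] := hIn _ u h hu iu hh.
exists (Ec R (Idx M)), u, v; split. all: try done. all: try exact: Ec_injective. all: by move=> m; rewrite vE.
Qed.

Lemma Cinj_In : C_injective M -> forall N, cyclic_mod N -> In_inv M N.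
Proof.
move=> hC N cN C i f hi ii hf.
exact: (fact_ext (hC N f cN hf) hi ii).
Qed.

Lemma part1 : subinj_ext_refl M -> (FG_injective M <-> C_injective M).
Proof.
move=> ser; split.
  by move=> hFG N h cN hh; apply: hFG => //; apply: cyclic_fg.
move=> hC N h fN hh.
have : In_inv M N.
  apply: (fg_induct (Q := In_inv M)) fN.
    by move=> A B C f g se; exact: (ser _ _ _ f g se).
  exact: Cinj_In.
by move=> hIn; apply: In_fact.
Qed.

Lemma part2 : subproj_ext_refl M -> (FG_projective M <-> C_projective M).
Proof.
move=> ser; split.
  move=> hFG N F f g hf sf hg cF; apply: hFG => //; exact: cyclic_fg.
move=> hC N F f g hf sf hg fF.
have : Pr_inv M F.
  apply: (fg_induct (Q := Pr_inv M)) fF.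
    by move=> A B C f' g' se; exact: (ser _ _ _ f' g' se).
  move=> N' cN' B g' f' hg' sg' hf'.
  have [h [hh hE]] := hC B N' g' f' hg' sg' hf' cN'.
  by exists h; split => // y; rewrite hE.
move=> hPr; have [h [hh hE]] := hPr N f g hf sf hg.
by exists h; split => // x; rewrite hE.
Qed.
End Final.

Theorem mainTheorem9 (R : pzRingType) (M : rmodType R) :
  (subinj_ext_refl M -> (FG_injective M <-> C_injective M)) /\
  (subproj_ext_refl M -> (FG_projective M <-> C_projective M)).
Proof. split; [exact: part1 | exact: part2]. Qed.
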